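(* Let $A$ be a ring with a nilpotent two-sided ideal $\mathfrak{a}$ such that the ring $\operatorname{gr}_{\mathfrak{a}}A = \bigoplus_{i\ge0}\mathfrak{a}^i/\mathfrak{a}^{i+1}$ is commutative, and let $s\in A$. (1) The set $\{s^j\}_{j\ge0}$ is a denominator set in $A$; let $A_s$ be the resulting ring of fractions. (2) Let $\bar A := A/\mathfrak{a}$, $\bar s$ the image of $s$ in $\bar A$, and $\mathfrak{a}_s$ the kernel of the canonical surjection $A_s\to\bar A_{\bar s}$. Then $\mathfrak{a}_s = \mathfrak{a}A_s = A_s\mathfrak{a}$, and this ideal is nilpotent. (3) An element $a\in A$ is invertible in $A_s$ if and only if its image $\bar a$ is invertible in $\bar A_{\bar s}$.
   Context: Rings are associative and unital. A subset $S$ of a ring $A$ is a denominator set if it is multiplicatively closed and satisfies the left and right Ore conditions and the left and right torsion (reversibility) conditions; then the ring of fractions $A_S$ exists: a ring homomorphism $A\to A_S$ universal for inverting $S$, every element of which has the form $a_1s_1^{-1}=s_2^{-1}a_2$ with $a_i\in A$, $s_i\in S$. *)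

(* Defs.v *)
From HB Require Import structures.
From mathcomp Require Import all_boot all_order all_algebra.
Set Implicit Arguments. Unset Strict Implicit. Unset Printing Implicit Defensive.
Import GRing.Theory.
Local Open Scope ring_scope.

(* Rings are associative and unital; the zero ring is allowed (pzRingType),
   since e.g. A_s = 0 when s is nilpotent. Subsets are Prop-valued predicates. *)

Definition two_sided_ideal (A : pzRingType) (I : A -> Prop) : Prop :=
  [/\ I 0, (forall x y, I x -> I y -> I (x + y)), (forall x, I x -> I (- x)),
      (forall a x, I x -> I (a * x)) & (forall a x, I x -> I (x * a))].

(* x belongs to I^n, the two-sided ideal generated by all products
   x_1 * ... * x_n with x_j in I (for n = 0 this is the whole ring). *)
Definition ideal_pow (A : pzRingType) (I : A -> Prop) (n : nat) (x : A) : Prop :=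
  exists (k : nat) (b c : 'I_k -> A) (f : 'I_k -> 'I_n -> A),
    (forall i j, I (f i j)) /\
    x = \sum_(i < k) (b i * (\prod_(j < n) f i j) * c i).

Definition ideal_nilpotent (A : pzRingType) (I : A -> Prop) : Prop :=
  exists n : nat, forall x, ideal_pow I n x -> x = 0.

(* gr_I A = (+)_i I^i / I^(i+1) is commutative: the product of homogeneous
   classes [x]_i [y]_j = [x y]_(i+j) is commutative, i.e.
   x y - y x lies in I^(i+j+1) whenever x in I^i and y in I^j. *)
Definition gr_commutative (A : pzRingType) (I : A -> Prop) : Prop :=
  forall (i j : nat) (x y : A), ideal_pow I i x -> ideal_pow I j y ->
    ideal_pow I (i + j).+1 (x * y - y * x).

Definition powers (A : pzRingType) (s : A) : A -> Prop :=
  fun x => exists j : nat, x = s ^+ j.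

Definition is_denominator_set (A : pzRingType) (S : A -> Prop) : Prop :=
  [/\ (S 1 /\ forall x y, S x -> S y -> S (x * y)),
      (forall (a t : A), S t -> exists (b u : A), S u /\ a * u = t * b),
      (forall (a t : A), S t -> exists (b u : A), S u /\ u * a = b * t),
      (forall (a t : A), S t -> t * a = 0 -> exists u, S u /\ a * u = 0)
    & (forall (a t : A), S t -> a * t = 0 -> exists u, S u /\ u * a = 0)].

Definition invertible (R : pzRingType) (x : R) : Prop :=
  exists y : R, x * y = 1 /\ y * x = 1.

Definition is_ring_of_fractions (A B : pzRingType) (S : A -> Prop)
    (phi : {rmorphism A -> B}) : Prop :=
  (forall t, S t -> invertible (phi t)) /\
  forall (R : pzRingType) (g : {rmorphism A -> R}),
    (forall t, S t -> invertible (g t)) ->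
    exists h : {rmorphism B -> R},
      (forall a, h (phi a) = g a) /\
      (forall h' : {rmorphism B -> R}, (forall a, h' (phi a) = g a) -> forall b, h' b = h b).

Definition ext_right (A B : pzRingType) (I : A -> Prop) (phi : {rmorphism A -> B}) (x : B) : Prop :=
  exists (k : nat) (a : 'I_k -> A) (b : 'I_k -> B),
    (forall i, I (a i)) /\ x = \sum_(i < k) (phi (a i) * b i).

Definition ext_left (A B : pzRingType) (I : A -> Prop) (phi : {rmorphism A -> B}) (x : B) : Prop :=
  exists (k : nat) (a : 'I_k -> A) (b : 'I_k -> B),
    (forall i, I (a i)) /\ x = \sum_(i < k) (b i * phi (a i)).

(* Main.v *)
Require Import Defs.
From HB Require Import structures.
From mathcomp Require Import all_boot all_order all_algebra.
From Stdlib Require Import ClassicalEpsilon.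
Set Implicit Arguments. Unset Strict Implicit. Unset Printing Implicit Defensive.
Import GRing.Theory.
Local Open Scope ring_scope.
Local Open Scope quotient_scope.

Definition pb (P : Prop) : bool :=
  if excluded_middle_informative P then true else false.
Lemma pbP (P : Prop) : pb P <-> P.
Proof. rewrite /pb; case: excluded_middle_informative => //. Qed.

Section Quot.
Variables (R : pzRingType) (J : R -> Prop).
Hypothesis hJ : two_sided_ideal J.

Let J0 : J 0. Proof. by case: hJ. Qed.
Let JD x y : J x -> J y -> J (x + y). Proof. by case: hJ => _ H _ _ _; apply: H. Qed.
Let JN x : J x -> J (- x). Proof. by case: hJ => _ _ H _ _; apply: H. Qed.
Let JL a x : J x -> J (a * x). Proof. by case: hJ => _ _ _ H _; apply: H. Qed.
Let JR a x : J x -> J (x * a). Proof. by case: hJ => _ _ _ _ H; apply: H. Qed.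

Definition qrel (x y : R) : bool := pb (J (x - y)).
Lemma qrel_refl : reflexive qrel.
Proof. by move=> x; apply/pbP; rewrite subrr. Qed.
Lemma qrel_sym : symmetric qrel.
Proof.
move=> x y; apply/idP/idP => /pbP H; apply/pbP; by rewrite -opprB; apply: JN.
Qed.
Lemma qrel_trans : transitive qrel.
Proof.
move=> y x z /pbP H1 /pbP H2; apply/pbP.
by have := JD H1 H2; rewrite addrA subrK.
Qed.
Canonical qrel_equiv := EquivRel qrel qrel_refl qrel_sym qrel_trans.
Definition Qt := {eq_quot qrel_equiv}%qT.
HB.instance Definition _ := Choice.on Qt.

Lemma piqE (a b : R) : \pi_Qt a = \pi_Qt b <-> J (a - b).
Proof.
split=> [/eqquotP /pbP //|/pbP H]; exact/eqquotP.
Qed.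

Local Notation pq := (\pi_Qt).
Lemma reprJ (a : R) : J (repr (pq a) - a).
Proof. by apply/piqE; rewrite reprK. Qed.

Definition qzero : Qt := pq 0.
Definition qone : Qt := pq 1.
Definition qopp (x : Qt) : Qt := pq (- repr x).
Definition qadd (x y : Qt) : Qt := pq (repr x + repr y).
Definition qmul (x y : Qt) : Qt := pq (repr x * repr y).

Lemma qoppE a : qopp (pq a) = pq (- a).
Proof. by apply/piqE; rewrite -opprD; apply: JN; apply: reprJ. Qed.
Lemma qaddE a b : qadd (pq a) (pq b) = pq (a + b).
Proof.
apply/piqE; have := JD (reprJ a) (reprJ b).
by rewrite opprD addrACA.
Qed.
Lemma qmulE a b : qmul (pq a) (pq b) = pq (a * b).
Proof.
apply/piqE; set ra := repr (pq a); set rb := repr (pq b).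
have -> : ra * rb - a * b = (ra - a) * rb + a * (rb - b).
  by rewrite mulrBl mulrBr addrA subrK.
by apply: JD; [apply: JR; apply: reprJ | apply: JL; apply: reprJ].
Qed.

Lemma qsurj (x : Qt) : exists a, x = pq a.
Proof. by exists (repr x); rewrite reprK. Qed.

Lemma qaddA : associative qadd.
Proof. by move=> x y z; case: (qsurj x) => a ->; case: (qsurj y) => b ->; case: (qsurj z) => c ->; rewrite !qaddE addrA. Qed.
Lemma qaddC : commutative qadd.
Proof. by move=> x y; case: (qsurj x) => a ->; case: (qsurj y) => b ->; rewrite !qaddE addrC. Qed.
Lemma qadd0 : left_id qzero qadd.
Proof. by move=> x; case: (qsurj x) => a ->; rewrite qaddE add0r. Qed.
Lemma qaddN : left_inverse qzero qopp qadd.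
Proof. by move=> x; case: (qsurj x) => a ->; rewrite qoppE qaddE addNr. Qed.
Lemma qmulA : associative qmul.
Proof. by move=> x y z; case: (qsurj x) => a ->; case: (qsurj y) => b ->; case: (qsurj z) => c ->; rewrite !qmulE mulrA. Qed.
Lemma qmul1 : left_id qone qmul.
Proof. by move=> x; case: (qsurj x) => a ->; rewrite qmulE mul1r. Qed.
Lemma qmulr1 : right_id qone qmul.
Proof. by move=> x; case: (qsurj x) => a ->; rewrite qmulE mulr1. Qed.
Lemma qmulDl : left_distributive qmul qadd.
Proof. by move=> x y z; case: (qsurj x) => a ->; case: (qsurj y) => b ->; case: (qsurj z) => c ->; rewrite !(qmulE, qaddE) mulrDl. Qed.
Lemma qmulDr : right_distributive qmul qadd.
Proof. by move=> x y z; case: (qsurj x) => a ->; case: (qsurj y) => b ->; case: (qsurj z) => c ->; rewrite !(qmulE, qaddE) mulrDr. Qed.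

HB.instance Definition _ := GRing.isPzRing.Build Qt
  qaddA qaddC qadd0 qaddN qmulA qmul1 qmulr1 qmulDl qmulDr.

Definition qmap (x : R) : Qt := pq x.
Lemma qmap_zmod : zmod_morphism qmap.
Proof. by move=> x y; rewrite /qmap; change (pq (x - y) = qadd (pq x) (qopp (pq y))); rewrite qoppE qaddE. Qed.
Lemma qmap_monoid : monoid_morphism qmap.
Proof. by split => // x y; rewrite /qmap; change (pq (x * y) = qmul (pq x) (pq y)); rewrite qmulE. Qed.
HB.instance Definition _ := GRing.isZmodMorphism.Build R Qt qmap qmap_zmod.
HB.instance Definition _ := GRing.isMonoidMorphism.Build R Qt qmap qmap_monoid.

Lemma qmap0 x : qmap x = 0 <-> J x.
Proof. by rewrite /qmap; change (pq x = pq 0 <-> J x); rewrite piqE subr0. Qed.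
Lemma qmap_surj (z : Qt) : exists x, qmap x = z.
Proof. by exists (repr z); rewrite /qmap reprK. Qed.
End Quot.

Lemma quot_exists (R : pzRingType) (J : R -> Prop) : two_sided_ideal J ->
  exists (Q : pzRingType) (q : {rmorphism R -> Q}),
    (forall x, q x = 0 <-> J x) /\ (forall z, exists x, q x = z).
Proof.
move=> hJ; exists (Qt hJ), (qmap hJ); split; [exact: qmap0 | exact: qmap_surj].
Qed.

Section Sub.
Variables (R : pzRingType) (P : R -> Prop).
Hypotheses (P1 : P 1) (PB : forall x y, P x -> P y -> P (x - y))
  (PM : forall x y, P x -> P y -> P (x * y)).

Definition Pb (x : R) : bool := pb (P x).
Definition St := {x : R | Pb x}.
HB.instance Definition _ := Choice.on St.

Lemma P0 : P 0. Proof. by rewrite -(subrr 1); apply: PB. Qed.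
Lemma PN x : P x -> P (- x). Proof. by move=> h; rewrite -sub0r; apply: PB => //; apply: P0. Qed.
Lemma PD x y : P x -> P y -> P (x + y).
Proof. by move=> hx hy; rewrite -(opprK y); apply: PB => //; apply: PN. Qed.

Definition smk (x : R) (h : P x) : St := exist _ x (proj2 (pbP _) h).
Lemma Pval (x : St) : P (val x). Proof. exact: (proj1 (pbP _) (valP x)). Qed.

Definition szero : St := smk P0.
Definition sone : St := smk P1.
Definition sopp (x : St) : St := smk (PN (Pval x)).
Definition sadd (x y : St) : St := smk (PD (Pval x) (Pval y)).
Definition smul (x y : St) : St := smk (PM (Pval x) (Pval y)).

Lemma saddA : associative sadd. Proof. by move=> x y z; apply: val_inj; rewrite /= addrA. Qed.
Lemma saddC : commutative sadd. Proof. by move=> x y; apply: val_inj; rewrite /= addrC. Qed.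
Lemma sadd0 : left_id szero sadd. Proof. by move=> x; apply: val_inj; rewrite /= add0r. Qed.
Lemma saddN : left_inverse szero sopp sadd. Proof. by move=> x; apply: val_inj; rewrite /= addNr. Qed.
Lemma smulA : associative smul. Proof. by move=> x y z; apply: val_inj; rewrite /= mulrA. Qed.
Lemma smul1 : left_id sone smul. Proof. by move=> x; apply: val_inj; rewrite /= mul1r. Qed.
Lemma smulr1 : right_id sone smul. Proof. by move=> x; apply: val_inj; rewrite /= mulr1. Qed.
Lemma smulDl : left_distributive smul sadd. Proof. by move=> x y z; apply: val_inj; rewrite /= mulrDl. Qed.
Lemma smulDr : right_distributive smul sadd. Proof. by move=> x y z; apply: val_inj; rewrite /= mulrDr. Qed.

HB.instance Definition _ := GRing.isPzRing.Build St
  saddA saddC sadd0 saddN smulA smul1 smulr1 smulDl smulDr.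

Definition sv (x : St) : R := val x.
Lemma sv_zmod : zmod_morphism sv. Proof. by []. Qed.
Lemma sv_monoid : monoid_morphism sv. Proof. by []. Qed.
HB.instance Definition _ := GRing.isZmodMorphism.Build St R sv sv_zmod.
HB.instance Definition _ := GRing.isMonoidMorphism.Build St R sv sv_monoid.

Variables (A : pzRingType) (phi : {rmorphism A -> R}).
Hypothesis Pphi : forall a, P (phi a).
Definition sg (a : A) : St := smk (Pphi a).
Lemma sg_zmod : zmod_morphism sg.
Proof. by move=> x y; apply: val_inj; rewrite /= rmorphB. Qed.
Lemma sg_monoid : monoid_morphism sg.
Proof. by split; [apply: val_inj; rewrite /= rmorph1 | move=> x y; apply: val_inj; rewrite /= rmorphM]. Qed.
HB.instance Definition _ := GRing.isZmodMorphism.Build A St sg sg_zmod.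
HB.instance Definition _ := GRing.isMonoidMorphism.Build A St sg sg_monoid.

Lemma subring_all (S : A -> Prop) :
  is_ring_of_fractions S phi ->
  (forall t, S t -> exists y, P y /\ phi t * y = 1 /\ y * phi t = 1) ->
  forall b, P b.
Proof.
move=> [hinv huniv] hPinv b.
have [h [hh _]] : exists h : {rmorphism R -> St},
   (forall a, h (phi a) = sg a) /\
   (forall h' : {rmorphism R -> St}, (forall a, h' (phi a) = sg a) -> forall b, h' b = h b).
  apply: huniv => t /hPinv [y [Py [h1 h2]]].
  by exists (smk Py); split; apply: val_inj.
have [h0 [_ hu]] := huniv R phi hinv.
have e1 : sv (h b) = h0 b by apply: (hu (sv \o h)) => a /=; rewrite hh.
have e2 : idfun b = h0 b by apply: (hu idfun).
by rewrite /= in e2; rewrite e2 -e1; apply: Pval.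
Qed.
End Sub.

Section Fac.
Variables (A Abar R : pzRingType) (pi : {rmorphism A -> Abar}) (I : A -> Prop)
  (k : {rmorphism A -> R}) (pre : Abar -> A).
Hypotheses (Hpre : forall y, pi (pre y) = y) (Hker : forall a, pi a = 0 <-> I a)
  (Hk : forall a, I a -> k a = 0).
Definition gfac (y : Abar) : R := k (pre y).
Lemma gfacE a : gfac (pi a) = k a.
Proof.
rewrite /gfac; apply/eqP; rewrite -subr_eq0 -rmorphB; apply/eqP/Hk/Hker.
by rewrite rmorphB Hpre subrr.
Qed.
Lemma gfac_zmod : zmod_morphism gfac.
Proof. by move=> x y; rewrite -(Hpre x) -(Hpre y) -rmorphB !gfacE rmorphB. Qed.
Lemma gfac_monoid : monoid_morphism gfac.
Proof.
split; first by rewrite -(rmorph1 pi) gfacE rmorph1.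
by move=> x y; rewrite -(Hpre x) -(Hpre y) -rmorphM !gfacE rmorphM.
Qed.
End Fac.

Lemma factor_exists (A Abar R : pzRingType) (pi : {rmorphism A -> Abar}) (I : A -> Prop)
  (k : {rmorphism A -> R}) :
  (forall y, exists a, pi a = y) -> (forall a, pi a = 0 <-> I a) ->
  (forall a, I a -> k a = 0) ->
  exists g : {rmorphism Abar -> R}, forall a, g (pi a) = k a.
Proof.
move=> hs hker hk.
pose pre y := proj1_sig (constructive_indefinite_description _ (hs y)).
have Hpre y : pi (pre y) = y by rewrite /pre; case: constructive_indefinite_description.
have zm := gfac_zmod Hpre hker hk.
have mm := gfac_monoid Hpre hker hk.
pose g : {rmorphism Abar -> R} := HB.pack (gfac k pre)
  (GRing.isZmodMorphism.Build Abar R (gfac k pre) zm)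
  (GRing.isMonoidMorphism.Build Abar R (gfac k pre) mm).
by exists g => a; apply: (gfacE Hpre hker hk).
Qed.

Close Scope quotient_scope.

Section Ad.
Variables (A : pzRingType) (s : A).
Definition ad (y : A) := s * y - y * s.

Section Q.
Variable Q : A -> Prop.
Hypothesis hQ : two_sided_ideal Q.
Let Q0 : Q 0. Proof. by case: hQ. Qed.
Let QD x y : Q x -> Q y -> Q (x + y). Proof. by case: hQ => _ H _ _ _; apply: H. Qed.
Let QN x : Q x -> Q (- x). Proof. by case: hQ => _ _ H _ _; apply: H. Qed.
Let QL a x : Q x -> Q (a * x). Proof. by case: hQ => _ _ _ H _; apply: H. Qed.
Let QR a x : Q x -> Q (x * a). Proof. by case: hQ => _ _ _ _ H; apply: H. Qed.
Let Qad x : Q x -> Q (ad x). Proof. by move=> h; apply: QD; [apply: QL | apply: QN; apply: QR]. Qed.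

Lemma ore_right n : forall y, iter n ad y = 0 -> Q y -> forall j, exists m,
  forall m', (m <= m')%N -> exists b, Q b /\ y * s ^+ m' = s ^+ j * b.
Proof.
elim: n => [|n IH] y /= hy Qy j.
  by exists 0%N => m' _; exists 0; rewrite hy mul0r mulr0.
have hz : iter n ad (ad y) = 0 by rewrite -iterSr.
have Qz := Qad Qy.
elim: j => [|j IHj].
  by exists 0%N => m' _; exists (y * s ^+ m'); rewrite expr0 mul1r; split => //; apply: QR.
have [m1 H1] := IHj.
have [m2 H2] := IH _ hz Qz j.+1.
exists (maxn m1 m2).+1 => [[|p]] // hp.
have [b1 [Qb1 e1]] := H1 p (leq_trans (leq_maxl _ _) hp).
have [b2 [Qb2 e2]] := H2 p (leq_trans (leq_maxr _ _) hp).
exists (b1 - b2); split; first by apply: QD => //; apply: QN.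
have ys : y * s = s * y - ad y by rewrite /ad opprB addrC subrK.
rewrite exprS mulrA ys mulrBl -mulrA e1 e2 mulrBr exprS mulrA.
by rewrite -mulrA.
Qed.

Lemma ore_left n : forall y, iter n ad y = 0 -> Q y -> forall j, exists m,
  forall m', (m <= m')%N -> exists b, Q b /\ s ^+ m' * y = b * s ^+ j.
Proof.
elim: n => [|n IH] y /= hy Qy j.
  by exists 0%N => m' _; exists 0; rewrite hy mul0r mulr0.
have hz : iter n ad (ad y) = 0 by rewrite -iterSr.
have Qz := Qad Qy.
elim: j => [|j IHj].
  by exists 0%N => m' _; exists (s ^+ m' * y); rewrite expr0 mulr1; split => //; apply: QL.
have [m1 H1] := IHj.
have [m2 H2] := IH _ hz Qz j.+1.
exists (maxn m1 m2).+1 => [[|p]] // hp.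
have [b1 [Qb1 e1]] := H1 p (leq_trans (leq_maxl _ _) hp).
have [b2 [Qb2 e2]] := H2 p (leq_trans (leq_maxr _ _) hp).
exists (b1 + b2); split; first by apply: QD.
have sy : s * y = y * s + ad y by rewrite /ad addrC subrK.
rewrite exprSr -mulrA sy mulrDr mulrA e1 e2 mulrDl exprSr mulrA.
by rewrite mulrA.
Qed.
End Q.

Lemma tors_right n : forall y, iter n ad y = 0 -> forall j, s ^+ j * y = 0 ->
  exists m, y * s ^+ m = 0.
Proof.
elim: n => [|n IH] y /= hy j hj; first by exists 0%N; rewrite hy mul0r.
have hz : iter n ad (ad y) = 0 by rewrite -iterSr.
have hzj : s ^+ j * ad y = 0.
  rewrite /ad mulrBr mulrA -exprSr exprS -mulrA hj mulr0 mulrA hj mul0r.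
  by rewrite subrr.
have [mz hmz] := IH _ hz _ hzj.
have key k : y * s ^+ (mz + k) = s ^+ k * y * s ^+ mz.
  elim: k => [|k IHk]; first by rewrite addn0 expr0 mul1r.
  have ys : y * s = s * y - ad y by rewrite /ad opprB addrC subrK.
  rewrite addnS exprS mulrA ys mulrBl [in X in _ - X]exprD mulrA hmz mul0r subr0.
  by rewrite -mulrA IHk exprS !mulrA.
by exists (mz + j)%N; rewrite key hj mul0r.
Qed.

Lemma tors_left n : forall y, iter n ad y = 0 -> forall j, y * s ^+ j = 0 ->
  exists m, s ^+ m * y = 0.
Proof.
elim: n => [|n IH] y /= hy j hj; first by exists 0%N; rewrite hy mulr0.
have hz : iter n ad (ad y) = 0 by rewrite -iterSr.
have hzj : ad y * s ^+ j = 0.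
  rewrite /ad mulrBl -mulrA hj mulr0 -mulrA -exprS exprSr mulrA hj mul0r.
  by rewrite subrr.
have [mz hmz] := IH _ hz _ hzj.
have key k : s ^+ (mz + k) * y = s ^+ mz * y * s ^+ k.
  elim: k => [|k IHk]; first by rewrite addn0 expr0 mulr1.
  have sy : s * y = y * s + ad y by rewrite /ad addrC subrK.
  rewrite addnS exprSr -mulrA sy mulrDr mulrA [in X in _ + X]addnC [in X in _ + X]exprD -[in X in _ + X]mulrA hmz mulr0 addr0.
  by rewrite IHk -!mulrA -exprSr.
by exists (mz + j)%N; rewrite key -mulrA hj mulr0.
Qed.
End Ad.

Section Pow.
Variables (A : pzRingType) (I : A -> Prop).
Hypothesis hI : two_sided_ideal I.
Lemma ipow0 x : ideal_pow I 0 x.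
Proof.
exists 1%N, (fun _ => x), (fun _ => 1), (fun _ _ => 0); split; first by case: hI.
by rewrite big_ord1 big_ord0 !mulr1.
Qed.
Lemma ipow_prod n (g : nat -> A) : (forall j, I (g j)) -> ideal_pow I n (\prod_(j < n) g j).
Proof.
move=> hg; exists 1%N, (fun _ => 1), (fun _ => 1), (fun _ j => g j); split => //.
by rewrite big_ord1 mul1r mulr1.
Qed.
Lemma ad_pow s (hgr : gr_commutative I) n y : ideal_pow I n (iter n (ad s) y).
Proof.
elim: n => [|n IH] /=; first exact: ipow0.
exact: (hgr 0%N n s _ (ipow0 s) IH).
Qed.
End Pow.

Lemma part1 (A : pzRingType) (I : A -> Prop) (s : A) :
  two_sided_ideal I -> ideal_nilpotent I -> gr_commutative I ->
  is_denominator_set (powers s).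
Proof.
move=> hI [N hN] hgr.
have adN y : iter N (ad s) y = 0 := hN _ (ad_pow hI s hgr N y).
have hT : two_sided_ideal (fun _ : A => True) by split.
split.
- split; first by exists 0%N; rewrite expr0.
  by move=> x y [j ->] [k ->]; exists (j + k)%N; rewrite exprD.
- move=> a t [j ->].
  have [m Hm] := ore_right hT (adN a) Logic.I j.
  have [b [_ e]] := Hm m (leqnn m).
  by exists b, (s ^+ m); split => //; exists m.
- move=> a t [j ->].
  have [m Hm] := ore_left hT (adN a) Logic.I j.
  have [b [_ e]] := Hm m (leqnn m).
  by exists b, (s ^+ m); split => //; exists m.
- move=> a t [j ->] e.
  have [m Hm] := tors_right (adN a) e.
  by exists (s ^+ m); split => //; exists m.
- move=> a t [j ->] e.
  have [m Hm] := tors_left (adN a) e.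
  by exists (s ^+ m); split => //; exists m.
Qed.

Lemma ideal_sum (R : pzRingType) (J : R -> Prop) (T : eqType) (r : seq T) (F : T -> R) :
  J 0 -> (forall x y, J x -> J y -> J (x + y)) ->
  (forall x, x \in r -> J (F x)) -> J (\sum_(x <- r) F x).
Proof.
move=> J0 JD; elim: r => [|x r IH] H; first by rewrite big_nil.
rewrite big_cons; apply: JD; first by apply: H; rewrite inE eqxx.
by apply: IH => y hy; apply: H; rewrite inE hy orbT.
Qed.

Lemma invertible_map (R S : pzRingType) (g : {rmorphism R -> S}) x :
  invertible x -> invertible (g x).
Proof. by case=> y [h1 h2]; exists (g y); rewrite -!rmorphM h1 h2 rmorph1. Qed.

Lemma geomR (R : pzRingType) (x : R) n : (1 - x) * \sum_(i < n) x ^+ i = 1 - x ^+ n.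
Proof.
elim: n => [|n IH]; first by rewrite big_ord0 mulr0 expr0 subrr.
by rewrite big_ord_recr /= mulrDr IH mulrBl mul1r -exprS addrA subrK.
Qed.
Lemma geomL (R : pzRingType) (x : R) n : (\sum_(i < n) x ^+ i) * (1 - x) = 1 - x ^+ n.
Proof.
elim: n => [|n IH]; first by rewrite big_ord0 mul0r expr0 subrr.
by rewrite big_ord_recr /= mulrDl IH mulrBr mulr1 -exprSr addrA subrK.
Qed.

Section Main.
Variables (A : pzRingType) (I : A -> Prop) (s : A) (N : nat).
Hypotheses (hI : two_sided_ideal I) (hN : forall x, ideal_pow I N x -> x = 0)
  (hgr : gr_commutative I).

Let I0 : I 0. Proof. by case: hI. Qed.
Let IL a x : I x -> I (a * x). Proof. by case: hI => _ _ _ H _; apply: H. Qed.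
Let IR a x : I x -> I (x * a). Proof. by case: hI => _ _ _ _ H; apply: H. Qed.
Let adN y : iter N (ad s) y = 0. Proof. exact: hN _ (ad_pow hI s hgr N y). Qed.
Let hT : two_sided_ideal (fun _ : A => True). Proof. by split. Qed.

Variables (B : pzRingType) (phi : {rmorphism A -> B}).
Hypothesis hphi : is_ring_of_fractions (powers s) phi.
Variable u : B.
Hypotheses (hu1 : phi s * u = 1) (hu2 : u * phi s = 1).

Lemma powu1 j : phi s ^+ j * u ^+ j = 1.
Proof.
elim: j => [|j IH]; first by rewrite !expr0 mulr1.
by rewrite exprSr exprS mulrA -(mulrA _ (phi s)) hu1 mulr1.
Qed.
Lemma powu2 j : u ^+ j * phi s ^+ j = 1.
Proof.
elim: j => [|j IH]; first by rewrite !expr0 mulr1.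
by rewrite exprSr exprS mulrA -(mulrA _ u) hu2 mulr1.
Qed.

Lemma commR (Q : A -> Prop) (hQ : two_sided_ideal Q) z j : Q z ->
  exists z' m, Q z' /\ u ^+ j * phi z = phi z' * u ^+ m.
Proof.
move=> Qz; have [m Hm] := ore_right hQ (adN z) Qz j.
have [b [Qb e]] := Hm m (leqnn _).
exists b, m; split => //.
have -> : u ^+ j * phi z = u ^+ j * phi (z * s ^+ m) * u ^+ m.
  by rewrite rmorphM rmorphXn -!mulrA powu1 mulr1.
by rewrite e rmorphM rmorphXn !mulrA powu2 mul1r.
Qed.

Lemma commL (Q : A -> Prop) (hQ : two_sided_ideal Q) z j : Q z ->
  exists z' m, Q z' /\ phi z * u ^+ j = u ^+ m * phi z'.
Proof.
move=> Qz; have [m Hm] := ore_left hQ (adN z) Qz j.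
have [b [Qb e]] := Hm m (leqnn _).
exists b, m; split => //.
have -> : phi z * u ^+ j = u ^+ m * phi (s ^+ m * z) * u ^+ j.
  by rewrite rmorphM rmorphXn !mulrA powu2 mul1r.
by rewrite e rmorphM rmorphXn -!mulrA powu1 mulr1.
Qed.

Lemma shiftR a j k : phi a * u ^+ j = phi (a * s ^+ k) * u ^+ (k + j).
Proof. by rewrite rmorphM rmorphXn exprD -mulrA (mulrA (phi s ^+ k)) powu1 mul1r. Qed.
Lemma shiftL a j k : u ^+ j * phi a = u ^+ (j + k) * phi (s ^+ k * a).
Proof. by rewrite rmorphM rmorphXn exprD -mulrA (mulrA (u ^+ k)) powu2 mul1r. Qed.

Lemma inv_pow t : powers s t -> exists y, phi t * y = 1 /\ y * phi t = 1.
Proof. by case=> j ->; exists (u ^+ j); rewrite rmorphXn powu1 powu2. Qed.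

Lemma B1 b : exists a j, b = phi a * u ^+ j.
Proof.
pose P b := exists a j, b = phi a * u ^+ j.
have P1 : P 1 by exists 1, 0%N; rewrite rmorph1 expr0 mulr1.
have PB x y : P x -> P y -> P (x - y).
  move=> [a [j ->]] [c [k ->]]; exists (a * s ^+ k - c * s ^+ j), (k + j)%N.
  by rewrite (shiftR a j k) (shiftR c k j) (addnC j k) rmorphB mulrBl.
have PM x y : P x -> P y -> P (x * y).
  move=> [a [j ->]] [c [k ->]].
  have [c' [m [_ e]]] := commR (z := c) hT j Logic.I.
  exists (a * c'), (m + k)%N.
  by rewrite -mulrA (mulrA (u ^+ j)) e rmorphM exprD !mulrA.
have Pphi a : P (phi a) by exists a, 0%N; rewrite expr0 mulr1.
apply: (subring_all P1 PB PM Pphi (S := powers s) hphi) => t [j ->].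
exists (u ^+ j); rewrite rmorphXn powu1 powu2; split => //.
by exists 1, j; rewrite rmorph1 mul1r.
Qed.

Lemma B2 b : exists a j, b = u ^+ j * phi a.
Proof.
pose P b := exists a j, b = u ^+ j * phi a.
have P1 : P 1 by exists 1, 0%N; rewrite rmorph1 expr0 mulr1.
have PB x y : P x -> P y -> P (x - y).
  move=> [a [j ->]] [c [k ->]]; exists (s ^+ k * a - s ^+ j * c), (j + k)%N.
  by rewrite (shiftL a j k) (shiftL c k j) (addnC k j) rmorphB mulrBr.
have PM x y : P x -> P y -> P (x * y).
  move=> [a [j ->]] [c [k ->]].
  have [a' [m [_ e]]] := commL (z := a) hT k Logic.I.
  exists (a' * c), (j + m)%N.
  by rewrite -mulrA (mulrA (phi a)) e rmorphM exprD !mulrA.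
have Pphi a : P (phi a) by exists a, 0%N; rewrite expr0 mul1r.
apply: (subring_all P1 PB PM Pphi (S := powers s) hphi) => t [j ->].
exists (u ^+ j); rewrite rmorphXn powu1 powu2; split => //.
by exists 1, j; rewrite rmorph1 mulr1.
Qed.

Definition Jr (b : B) : Prop := exists l : seq (A * B),
  (forall p, p \in l -> I p.1) /\ b = \sum_(p <- l) phi p.1 * p.2.
Definition Jl (b : B) : Prop := exists l : seq (A * B),
  (forall p, p \in l -> I p.1) /\ b = \sum_(p <- l) p.2 * phi p.1.

Lemma Jr_phi z : I z -> Jr (phi z).
Proof.
move=> h; exists [:: (z, 1)]; split; last by rewrite big_seq1 mulr1.
by move=> p; rewrite inE => /eqP ->.
Qed.
Lemma Jl_phi z : I z -> Jl (phi z).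
Proof.
move=> h; exists [:: (z, 1)]; split; last by rewrite big_seq1 mul1r.
by move=> p; rewrite inE => /eqP ->.
Qed.

Lemma Jr_L c z : I z -> Jr (c * phi z).
Proof.
move=> h; have [e [j ->]] := B2 c.
have [z' [m [Iz' E]]] := commR hI j (IL e h).
by rewrite -mulrA -rmorphM E; exists [:: (z', u ^+ m)]; split;
  [move=> p; rewrite inE => /eqP -> | rewrite big_seq1].
Qed.
Lemma Jl_R c z : I z -> Jl (phi z * c).
Proof.
move=> h; have [e [j ->]] := B1 c.
have [z' [m [Iz' E]]] := commL hI j (IR e h).
by rewrite mulrA -rmorphM E; exists [:: (z', u ^+ m)]; split;
  [move=> p; rewrite inE => /eqP -> | rewrite big_seq1].
Qed.

Lemma Jr_ideal : two_sided_ideal Jr.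
Proof.
have J0 : Jr 0 by exists [::]; rewrite big_nil.
have JD x y : Jr x -> Jr y -> Jr (x + y).
  move=> [l1 [h1 ->]] [l2 [h2 ->]]; exists (l1 ++ l2); rewrite big_cat; split => //.
  by move=> p; rewrite mem_cat => /orP [] ?; [apply: h1 | apply: h2].
have JR a x : Jr x -> Jr (x * a).
  move=> [l [h ->]]; exists [seq (p.1, p.2 * a) | p <- l]; split.
    by move=> p /mapP [q hq ->] /=; apply: h.
  by rewrite big_map mulr_suml; apply: eq_bigr => p _; rewrite mulrA.
split => //.
- move=> x [l [h ->]]; exists [seq (p.1, - p.2) | p <- l]; split.
    by move=> p /mapP [q hq ->] /=; apply: h.
  by rewrite big_map -sumrN; apply: eq_bigr => p _; rewrite mulrN.
- move=> a x [l [h ->]]; rewrite mulr_sumr.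
  apply: (@ideal_sum _ _ _ l (fun p => a * (phi p.1 * p.2)) J0 JD).
  by move=> p hp; rewrite mulrA; apply: JR; apply: Jr_L; apply: h.
Qed.

Lemma Jl_ideal : two_sided_ideal Jl.
Proof.
have J0 : Jl 0 by exists [::]; rewrite big_nil.
have JD x y : Jl x -> Jl y -> Jl (x + y).
  move=> [l1 [h1 ->]] [l2 [h2 ->]]; exists (l1 ++ l2); rewrite big_cat; split => //.
  by move=> p; rewrite mem_cat => /orP [] ?; [apply: h1 | apply: h2].
have JL a x : Jl x -> Jl (a * x).
  move=> [l [h ->]]; exists [seq (p.1, a * p.2) | p <- l]; split.
    by move=> p /mapP [q hq ->] /=; apply: h.
  by rewrite big_map mulr_sumr; apply: eq_bigr => p _; rewrite mulrA.
split => //.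
- move=> x [l [h ->]]; exists [seq (p.1, - p.2) | p <- l]; split.
    by move=> p /mapP [q hq ->] /=; apply: h.
  by rewrite big_map -sumrN; apply: eq_bigr => p _; rewrite mulNr.
- move=> a x [l [h ->]]; rewrite mulr_suml.
  apply: (@ideal_sum _ _ _ l (fun p => p.2 * phi p.1 * a) J0 JD).
  by move=> p hp; rewrite -mulrA; apply: JL; apply: Jl_R; apply: h.
Qed.

Lemma Jr_ext b : Jr b <-> ext_right I phi b.
Proof.
split.
  move=> [l [h ->]]; exists (size l), (fun i => (nth (0, 0) l i).1),
    (fun i => (nth (0, 0) l i).2); split.
    by move=> i; apply: h; apply: mem_nth.
  by rewrite (big_nth (0, 0)) big_mkord.
move=> [k [a [b' [h ->]]]]; exists [seq (a i, b' i) | i <- index_enum 'I_k]; split.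
  by move=> p /mapP [q hq ->] /=; apply: h.
by rewrite big_map.
Qed.
Lemma Jl_ext b : Jl b <-> ext_left I phi b.
Proof.
split.
  move=> [l [h ->]]; exists (size l), (fun i => (nth (0, 0) l i).1),
    (fun i => (nth (0, 0) l i).2); split.
    by move=> i; apply: h; apply: mem_nth.
  by rewrite (big_nth (0, 0)) big_mkord.
move=> [k [a [b' [h ->]]]]; exists [seq (a i, b' i) | i <- index_enum 'I_k]; split.
  by move=> p /mapP [q hq ->] /=; apply: h.
by rewrite big_map.
Qed.

Definition Prod n (a : A) := exists g : nat -> A, (forall j, I (g j)) /\ a = \prod_(j < n) g j.
Definition Jrn n (b : B) : Prop := exists l : seq (A * B),
  (forall p, p \in l -> Prod n p.1) /\ b = \sum_(p <- l) phi p.1 * p.2.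

Lemma Prod_mul n a y : I a -> Prod n y -> Prod n.+1 (a * y).
Proof.
move=> Ia [g [hg ->]]; exists (fun j => if j is j'.+1 then g j' else a); split.
  by case.
rewrite big_ord_recl /=; congr (_ * _); apply: eq_bigr => i _; by rewrite lift0.
Qed.

Lemma Jrn_add n x y : Jrn n x -> Jrn n y -> Jrn n (x + y).
Proof.
move=> [l1 [h1 ->]] [l2 [h2 ->]]; exists (l1 ++ l2); rewrite big_cat; split => //.
by move=> p; rewrite mem_cat => /orP [] ?; [apply: h1 | apply: h2].
Qed.
Lemma Jrn0 n : Jrn n 0. Proof. by exists [::]; rewrite big_nil. Qed.

Lemma nil_main n : forall c (F : 'I_n -> B), (forall j, Jr (F j)) ->
  Jrn n (c * \prod_(j < n) F j).
Proof.
elim: n => [|n IH] c F hF.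
  rewrite big_ord0 mulr1; exists [:: (1, c)]; split; last by rewrite big_seq1 rmorph1 mul1r.
  move=> p; rewrite inE => /eqP -> /=; exists (fun _ => 0); split => //.
  by rewrite big_ord0.
rewrite big_ord_recl mulrA.
have : Jr (c * F ord0) by case: Jr_ideal => _ _ _ H _; apply: H.
move=> [l [hl ->]]; rewrite mulr_suml.
apply: (@ideal_sum _ _ _ l _ (Jrn0 n.+1) (@Jrn_add n.+1)) => p hp.
have [l' [hl' e]] := IH p.2 (fun i => F (lift ord0 i)) (fun i => hF _).
rewrite -mulrA e mulr_sumr.
exists [seq (p.1 * q.1, q.2) | q <- l']; split.
  by move=> q /mapP [q' hq' ->] /=; apply: Prod_mul; [apply: hl | apply: hl'].
by rewrite big_map; apply: eq_bigr => q _; rewrite rmorphM mulrA.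
Qed.

Lemma Jrn_N b : Jrn N b -> b = 0.
Proof.
move=> [l [hl ->]]; rewrite big_seq big1 // => p hp.
have [g [hg e]] := hl p hp.
by rewrite e (hN (ipow_prod N hg)) rmorph0 mul0r.
Qed.

Lemma Jr_nilp_elt x : Jr x -> x ^+ N = 0.
Proof.
move=> hx; apply: Jrn_N.
have := @nil_main N 1 (fun _ : 'I_N => x) (fun _ => hx).
by rewrite mul1r prodr_const card_ord.
Qed.

Lemma one_sub_inv x : Jr x -> exists v, (1 - x) * v = 1 /\ v * (1 - x) = 1.
Proof.
move=> hx; exists (\sum_(i < N) x ^+ i).
by rewrite geomR geomL (Jr_nilp_elt hx) subr0.
Qed.

Variables (Abar : pzRingType) (pi : {rmorphism A -> Abar}).
Hypotheses (hsurj : forall y : Abar, exists a : A, pi a = y)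
  (hker : forall a : A, pi a = 0 <-> I a).
Variables (C : pzRingType) (psi : {rmorphism Abar -> C}).
Hypothesis hpsi : is_ring_of_fractions (powers (pi s)) psi.
Variable f : {rmorphism B -> C}.
Hypothesis hf : forall a : A, f (phi a) = psi (pi a).

Lemma Jr_ker b : Jr b -> f b = 0.
Proof.
move=> [l [hl ->]]; rewrite rmorph_sum big_seq big1 // => p hp.
by rewrite rmorphM hf (proj2 (hker _) (hl p hp)) rmorph0 mul0r.
Qed.
Lemma Jl_ker b : Jl b -> f b = 0.
Proof.
move=> [l [hl ->]]; rewrite rmorph_sum big_seq big1 // => p hp.
by rewrite rmorphM hf (proj2 (hker _) (hl p hp)) rmorph0 mulr0.
Qed.

Lemma kerJ (J : B -> Prop) : two_sided_ideal J -> (forall a, I a -> J (phi a)) ->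
  exists (Q : pzRingType) (q : {rmorphism B -> Q}) (h : {rmorphism C -> Q}),
    [/\ (forall x, q x = 0 <-> J x), (forall z, exists x, q x = z)
      & (forall b, h (f b) = q b)].
Proof.
move=> hJ hJphi.
have [Q [q [hq0 hqs]]] := quot_exists hJ.
have [g hg] : exists g : {rmorphism Abar -> Q}, forall a, g (pi a) = (q \o phi) a.
  by apply: factor_exists => // a Ia /=; apply/hq0/hJphi.
have qinv t : powers s t -> invertible ((q \o phi) t).
  by move=> ht /=; apply: invertible_map; apply: (proj1 hphi).
have [h [hh _]] := (proj2 hpsi) Q g (fun t ht => match ht with
   ex_intro j e => ltac:(rewrite e -rmorphXn hg; apply: qinv; exists j; reflexivity) end).
exists Q, q, h; split => // b.
have [h0 [_ hu]] := (proj2 hphi) Q (q \o phi) qinv.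
have e1 : (h \o f) b = h0 b by apply: hu => a /=; rewrite hf hh hg.
have e2 : q b = h0 b by apply: hu.
by rewrite e2 -e1.
Qed.

Lemma ker_Jr b : f b = 0 -> Jr b.
Proof.
move=> hb; have [Q [q [h [hq0 _ hh]]]] := kerJ Jr_ideal Jr_phi.
by apply/hq0; rewrite -hh hb rmorph0.
Qed.
Lemma ker_Jl b : f b = 0 -> Jl b.
Proof.
move=> hb; have [Q [q [h [hq0 _ hh]]]] := kerJ Jl_ideal Jl_phi.
by apply/hq0; rewrite -hh hb rmorph0.
Qed.

Lemma ker_nilp : ideal_nilpotent (fun b : B => f b = 0).
Proof.
exists N => x [k [b [c [F [hF ->]]]]].
rewrite big1 // => i _.
have := nil_main (b i) (fun j => ker_Jr (hF i j)).
by move/Jrn_N ->; rewrite mul0r.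
Qed.

Lemma part3 a : invertible (psi (pi a)) -> invertible (phi a).
Proof.
move=> [w [hw1 hw2]].
have [Q [q [h [hq0 hqs hh]]]] := kerJ Jr_ideal Jr_phi.
have [y hy] := hqs (h w).
have e1 : Jr (1 - phi a * y).
  by apply/hq0; rewrite rmorphB rmorph1 rmorphM hy -hh hf -rmorphM hw1 rmorph1 subrr.
have e2 : Jr (1 - y * phi a).
  by apply/hq0; rewrite rmorphB rmorph1 rmorphM hy -hh hf -rmorphM hw2 rmorph1 subrr.
have [v [hv1 _]] := one_sub_inv e1.
have [v' [_ hv2]] := one_sub_inv e2.
have E (z : B) : 1 - (1 - z) = z by rewrite opprB addrC subrK.
rewrite !E in hv1 hv2.
exists (y * v); split; first by rewrite mulrA.
have : v' * y = y * v.
  by rewrite -[v' * y]mulr1 -hv1 !mulrA -(mulrA v') hv2 mul1r.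
by move <-; rewrite -mulrA.
Qed.
End Main.

Unset Implicit Arguments.
Set Strict Implicit.

Theorem lemma1p12 (A : pzRingType) (I : A -> Prop) (s : A) :
  two_sided_ideal I -> ideal_nilpotent I -> gr_commutative I ->
  is_denominator_set (powers s) /\
  (forall (B : pzRingType) (phi : {rmorphism A -> B}),
     is_ring_of_fractions (powers s) phi ->
   forall (Abar : pzRingType) (pi : {rmorphism A -> Abar}),
     (forall y : Abar, exists a : A, pi a = y) ->
     (forall a : A, pi a = 0 <-> I a) ->
   forall (C : pzRingType) (psi : {rmorphism Abar -> C}),
     is_ring_of_fractions (powers (pi s)) psi ->
     (forall f : {rmorphism B -> C}, (forall a : A, f (phi a) = psi (pi a)) ->
        [/\ (forall b : B, f b = 0 <-> ext_right I phi b),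
            (forall b : B, f b = 0 <-> ext_left I phi b)
          & ideal_nilpotent (fun b : B => f b = 0)]) /\
     (forall a : A, invertible (phi a) <-> invertible (psi (pi a)))).
Proof.
move=> hI hnil hgr; split; first exact: (part1 s hI hnil hgr).
have [N hN] := hnil.
move=> B phi hphi Abar pi hsurj hker C psi hpsi.
have [u [hu1 hu2]] : invertible (phi s) by apply: (proj1 hphi); exists 1%N; rewrite GRing.expr1.
have hgf : forall t, powers s t -> invertible ((psi \o pi) t).
  move=> t [j ->] /=; rewrite (GRing.rmorphXn pi); apply: (proj1 hpsi); by exists j.
have [f0 [hf0 _]] := proj2 hphi C (psi \o pi) hgf.
split.
- move=> f hf; split.
  + move=> b; rewrite -Jr_ext; split; first exact: (ker_Jr hI hN hgr hphi hu1 hu2 hsurj hker hpsi hf).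
    exact: (Jr_ker hker hf).
  + move=> b; rewrite -Jl_ext; split; first exact: (ker_Jl hI hN hgr hphi hu1 hu2 hsurj hker hpsi hf).
    exact: (Jl_ker hker hf).
  + exact: (ker_nilp hI hN hgr hphi hu1 hu2 hsurj hker hpsi hf).
- move=> a; split.
  + by move=> h; have := invertible_map f0 h; rewrite hf0.
  + exact: (part3 hI hN hgr hphi hu1 hu2 hsurj hker hpsi hf0).
Qed.
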